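(* Let $N\geq 4$ and $G=\mathrm{GL}_2(\mathbb{Z}/N\mathbb{Z})$. For every $\gamma\in\mathrm{SL}_2(\mathbb{Z})$ with reduction $\bar\gamma\in\mathrm{SL}_2(\mathbb{Z}/N\mathbb{Z})$, every $P\in\mathbb{Z}[X,Y]_1$ and all $\alpha,\beta\in\mathcal{H}\cup\mathbb{P}^1(\mathbb{Q})$, we have \[ \bar\gamma_*\big(P\{\alpha,\beta\}\big)=(\gamma P)\{\gamma\alpha,\gamma\beta\} \] as $2$-chains on $E(N)(\mathbb{C})$.
   Context: $\mathcal{H}$ is the upper half-plane. $E(N)(\mathbb{C})=(\mathbb{Z}^2\rtimes\mathrm{SL}_2(\mathbb{Z}))\backslash(\mathcal{H}\times\mathbb{C}\times G)$, where $(m,n)^T\in\mathbb{Z}^2$ acts by $(\tau,z,h)\mapsto(\tau,z+m-n\tau,h)$ and $\begin{pmatrix}a&b\\c&d\end{pmatrix}\in\mathrm{SL}_2(\mathbb{Z})$ acts by $(\tau,z,h)\mapsto\big(\frac{a\tau+b}{c\tau+d},\frac{z}{c\tau+d},\bar\gamma h\big)$ (left multiplication on $G$ by the reduction). An element $g\in G$ acts on $E(N)(\mathbb{C})$ by $g\cdot[\tau,z,h]=[\tau,z,hg^T]$; $g_*$ denotes push-forward of chains. $\mathbb{Z}[X,Y]_1$ is the group of homogeneous degree-$1$ integer polynomials, with left $\mathrm{SL}_2(\mathbb{Z})$-action $\begin{pmatrix}a&b\\c&d\end{pmatrix}P(X,Y)=P(dX-bY,-cX+aY)$; $\mathrm{SL}_2(\mathbb{Z})$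 acts on $\mathcal{H}\cup\mathbb{P}^1(\mathbb{Q})$ by Möbius transformations. Let $\sigma=\begin{pmatrix}0&-1\\1&0\end{pmatrix}$. For $P=mX+nY$, the Shokurov cycle is $P\{\alpha,\beta\}=\{[\tau,t(m\tau+n),\sigma] : \tau\in\{\alpha,\beta\},\ t\in[0,1]\}$, where $\{\alpha,\beta\}$ is the hyperbolic geodesic from $\alpha$ to $\beta$. *)

(* Defs.v *)
From mathcomp Require Import all_boot all_order all_algebra complex.
From mathcomp Require Import Rstruct.
Set Implicit Arguments. Unset Strict Implicit. Unset Printing Implicit Defensive.
Import Order.TTheory GRing.Theory Num.Theory.
Local Open Scope ring_scope.

Notation Rr := Rdefinitions.R.
Notation C := (Rr[i]).
Definition toC (x : Rr) : C := real_complex Rr x.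

Definition isSL2Z (g : 'M[int]_2) : Prop := \det g = 1.

Definition ea (g : 'M[int]_2) : int := g 0 0.
Definition eb (g : 'M[int]_2) : int := g 0 1.
Definition ec (g : 'M[int]_2) : int := g 1 0.
Definition ed (g : 'M[int]_2) : int := g 1 1.

(* reduction \bar gamma in M_2(Z/NZ) (here N >= 4, so 'Z_N = Z/NZ) *)
Definition redN (N : nat) (g : 'M[int]_2) : 'M['Z_N]_2 :=
  map_mx (fun x : int => x%:~R) g.

Definition sigmaZ : 'M[int]_2 :=
  \matrix_(i < 2, j < 2)
    (if (i == 0) && (j == 1) then -1 else if (i == 1) && (j == 0) then 1 else 0).

Definition mob (g : 'M[int]_2) (tau : C) : C :=
  ((ea g)%:~R * tau + (eb g)%:~R) / ((ec g)%:~R * tau + (ed g)%:~R).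

(* E(N)(C) as the set of orbits of (Z^2 x| SL_2(Z)) on H x C x G       *)

(* representatives (tau, z, h); G = GL_2(Z/NZ) is realised inside 2x2
   matrices over 'Z_N; all points actually used have tau in H and h in G *)
Definition Rep (N : nat) := (C * C * 'M['Z_N]_2)%type.

Definition actZ2 N (m n : int) (x : Rep N) : Rep N :=
  let: (tau, z, h) := x in (tau, z + m%:~R - n%:~R * tau, h).

Definition actSL N (g : 'M[int]_2) (x : Rep N) : Rep N :=
  let: (tau, z, h) := x in
  (mob g tau, z / ((ec g)%:~R * tau + (ed g)%:~R), redN N g *m h).

Definition same_orbit N (x y : Rep N) : Prop :=
  exists (g : 'M[int]_2) (m n : int), isSL2Z g /\ y = actSL g (actZ2 m n x).

(* a point of E(N)(C) is an orbit, i.e. a subset of representatives *)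
Definition EN (N : nat) := Rep N -> Prop.

Definition pt N (tau z : C) (h : 'M['Z_N]_2) : EN N :=
  fun y => same_orbit (tau, z, h) y.

Definition gactE N (g : 'M['Z_N]_2) (S : EN N) : EN N :=
  fun y => exists tau z h, S (tau, z, h) /\ y = (tau, z, h *m g^T).

Inductive HP1 := Hpt of C | Cusp of rat | Infty.

Definition validHP1 (a : HP1) : Prop :=
  match a with Hpt tau => 0 < complex.Im tau | _ => True end.

Definition mobHP1 (g : 'M[int]_2) (a : HP1) : HP1 :=
  match a with
  | Hpt tau => Hpt (mob g tau)
  | Cusp r =>
      let den := (ec g)%:~R * r + (ed g)%:~R in
      if den == 0 then Infty else Cusp (((ea g)%:~R * r + (eb g)%:~R) / den)
  | Infty => if ec g == 0 then Infty else Cusp ((ea g)%:~R / (ec g)%:~R)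
  end.

Definition finpt (a : HP1) : option C :=
  match a with
  | Hpt tau => Some tau
  | Cusp r => Some (toC (ratr r))
  | Infty => None
  end.

Definition betw (x y z : Rr) : Prop := Num.min x y <= z <= Num.max x y.

(* geod a b tau : tau in H lies on the hyperbolic geodesic {a, b}
   (closed at endpoints lying in H; cusps are not points of H).
   Geodesics are vertical half-lines or semicircles centred on R. *)
Definition geod (a b : HP1) (tau : C) : Prop :=
  0 < complex.Im tau /\
  match finpt a, finpt b with
  | Some u, Some v =>
      if u == v then tau = u
      else if complex.Re u == complex.Re v then
        complex.Re tau = complex.Re u /\ betw (complex.Im u) (complex.Im v) (complex.Im tau)
      else exists c : Rr,
        `|u - toC c| = `|v - toC c| /\ `|tau - toC c| = `|u - toC c| /\
        betw (complex.Re u) (complex.Re v) (complex.Re tau)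
  | None, Some v | Some v, None =>
      complex.Re tau = complex.Re v /\ complex.Im v <= complex.Im tau
  | None, None => False
  end.

(* orientation of {a,b}: tau1 comes (weakly) before tau2 when going from a to b *)
Definition geod_before (a b : HP1) (tau1 tau2 : C) : Prop :=
  geod a b tau1 /\ geod a b tau2 /\ geod a (Hpt tau2) tau1.

(* Z[X,Y]_1 : P = m X + n Y  is stored as the pair (m, n) *)
Definition poly1 := (int * int)%type.

(* gamma P (X,Y) = P(dX - bY, -cX + aY) = (m d - n c) X + (n a - m b) Y *)
Definition actPoly (g : 'M[int]_2) (P : poly1) : poly1 :=
  let: (m, n) := P in (m * ed g - n * ec g, n * ea g - m * eb g).

(* an oriented parametrised 2-cell: the domain is {a,b} x [0,1],
   oriented by the orientation of {a,b} and of [0,1] *)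
Record cell2 (N : nat) := Cell2 {
  cell_a : HP1; cell_b : HP1; cell_map : C -> Rr -> EN N }.

Definition shokurov N (P : poly1) (a b : HP1) : cell2 N :=
  Cell2 a b (fun tau (t : Rr) =>
    pt tau (toC t * ((P.1)%:~R * tau + (P.2)%:~R)) (redN N sigmaZ)).

Definition pushE N (g : 'M['Z_N]_2) (c : cell2 N) : cell2 N :=
  Cell2 (cell_a c) (cell_b c) (fun tau t => gactE g (cell_map c tau t)).

(* equality as 2-chains: the two cells agree up to an orientation-preserving
   reparametrisation of the geodesic factor (t in [0,1] untouched) *)
Definition chain_eq N (c1 c2 : cell2 N) : Prop :=
  exists phi : C -> C,
    (forall tau, geod (cell_a c1) (cell_b c1) tau ->
                 geod (cell_a c2) (cell_b c2) (phi tau)) /\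
    (forall tau', geod (cell_a c2) (cell_b c2) tau' ->
       exists tau, geod (cell_a c1) (cell_b c1) tau /\ phi tau = tau') /\
    (forall tau1 tau2, geod (cell_a c1) (cell_b c1) tau1 ->
       geod (cell_a c1) (cell_b c1) tau2 -> phi tau1 = phi tau2 -> tau1 = tau2) /\
    (forall tau1 tau2, geod (cell_a c1) (cell_b c1) tau1 ->
       geod (cell_a c1) (cell_b c1) tau2 ->
       (geod_before (cell_a c1) (cell_b c1) tau1 tau2 <->
        geod_before (cell_a c2) (cell_b c2) (phi tau1) (phi tau2))) /\
    (forall tau (t : Rr), geod (cell_a c1) (cell_b c1) tau -> 0 <= t <= 1 ->
       cell_map c1 tau t = cell_map c2 (phi tau) t).

(* Main.v *)
Require Import Defs.
From mathcomp Require Import all_boot all_order all_algebra complex.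
From mathcomp Require Import Rstruct.
From mathcomp Require Import ring lra.
From Stdlib Require Import FunctionalExtensionality PropExtensionality.
Set Implicit Arguments. Unset Strict Implicit. Unset Printing Implicit Defensive.
Import Order.TTheory GRing.Theory Num.Theory.
Local Open Scope ring_scope.
Lemma det2 (R : comNzRingType) (A : 'M[R]_2) : \det A = A 0 0 * A 1 1 - A 0 1 * A 1 0.
Proof.
rewrite (expand_det_row _ 0) !big_ord_recl big_ord0 /cofactor !det_mx11 !mxE /=.
have e1 : lift (0 : 'I_2) (0 : 'I_1) = 1 by apply/val_inj.
have e2 : lift (ord0 : 'I_2) (0 : 'I_1) = 1 by apply/val_inj.
have e3 : lift (lift (ord0 : 'I_2) (ord0 : 'I_1)) (0 : 'I_1) = 0 by apply/val_inj.
have e4 : lift (ord0 : 'I_2) (ord0 : 'I_1) = 1 by apply/val_inj.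
have e6 : lift (1 : 'I_2) (0 : 'I_1) = 0 by apply/val_inj.
have e5 : (ord0 : 'I_2) = 0 by apply/val_inj.
rewrite ?e1 ?e2 ?e3 ?e4 ?e6 /= ?expr0 ?expr1 ?addr0 ?mul1r ?mulN1r e5 mulrN.
by [].
Qed.
Lemma ReM (x y : C) : complex.Re (x * y) = complex.Re x * complex.Re y - complex.Im x * complex.Im y.
Proof. by case: x => a b; case: y => c d. Qed.
Lemma ImM (x y : C) : complex.Im (x * y) = complex.Re x * complex.Im y + complex.Im x * complex.Re y.
Proof. by case: x => a b; case: y => c d. Qed.
Lemma ReV (x : C) : complex.Re (x^-1) = complex.Re x / (complex.Re x ^+ 2 + complex.Im x ^+ 2).
Proof. by case: x => a b. Qed.
Lemma ImV (x : C) : complex.Im (x^-1) = - (complex.Im x / (complex.Re x ^+ 2 + complex.Im x ^+ 2)).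
Proof. by case: x => a b. Qed.
Lemma ReJ (x : C) : complex.Re (x^*)%C = complex.Re x. Proof. by case: x. Qed.
Lemma ImJ (x : C) : complex.Im (x^*)%C = - complex.Im x. Proof. by case: x. Qed.
Lemma Cint (z : int) : (z%:~R : C) = toC (z%:~R : Rr).
Proof. by rewrite /toC (rmorph_int (real_complex Rr)). Qed.
Lemma ReR (r : Rr) : complex.Re (toC r) = r. Proof. by []. Qed.
Lemma ImR (r : Rr) : complex.Im (toC r) = 0. Proof. by []. Qed.
Lemma ReD (x y : C) : complex.Re (x + y) = complex.Re x + complex.Re y. Proof. by case: x; case: y. Qed.
Lemma ImD (x y : C) : complex.Im (x + y) = complex.Im x + complex.Im y. Proof. by case: x; case: y. Qed.
Lemma ReN (x : C) : complex.Re (- x) = - complex.Re x. Proof. by case: x. Qed.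
Lemma ImN (x : C) : complex.Im (- x) = - complex.Im x. Proof. by case: x. Qed.
Lemma Re1 : complex.Re (1 : C) = 1. Proof. by []. Qed.
Lemma Im1 : complex.Im (1 : C) = 0. Proof. by []. Qed.
Lemma toCE r : toC r = (r%:C)%C. Proof. by []. Qed.

Definition sl (g : 'M[int]_2) := ea g * ed g - eb g * ec g = 1.

Lemma isSL_sl g : isSL2Z g -> sl g.
Proof. by rewrite /isSL2Z det2. Qed.

Lemma sl_isSL g : sl g -> isSL2Z g.
Proof. by rewrite /isSL2Z det2. Qed.

Lemma mulE (k g : 'M[int]_2) i j : (k *m g) i j = k i 0 * g 0 j + k i 1 * g 1 j.
Proof. by rewrite !mxE !big_ord_recl big_ord0 addr0; congr (k _ _ * g _ _ + k _ _ * g _ _); apply/val_inj. Qed.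

Lemma eaM k g : ea (k *m g) = ea k * ea g + eb k * ec g. Proof. exact: mulE. Qed.
Lemma ebM k g : eb (k *m g) = ea k * eb g + eb k * ed g. Proof. exact: mulE. Qed.
Lemma ecM k g : ec (k *m g) = ec k * ea g + ed k * ec g. Proof. exact: mulE. Qed.
Lemma edM k g : ed (k *m g) = ec k * eb g + ed k * ed g. Proof. exact: mulE. Qed.

Lemma sl_mul k g : sl k -> sl g -> sl (k *m g).
Proof.
rewrite /sl => hk hg.
have -> : ea (k *m g) * ed (k *m g) - eb (k *m g) * ec (k *m g) =
  (ea k * ed k - eb k * ec k) * (ea g * ed g - eb g * ec g).
  by rewrite eaM ebM ecM edM; ring.
by rewrite hk hg mulr1.
Qed.

Definition ginv (g : 'M[int]_2) : 'M[int]_2 :=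
  \matrix_(i < 2, j < 2) (if i == 0 then (if j == 0 then ed g else - eb g)
                                     else (if j == 0 then - ec g else ea g)).

Lemma eaI g : ea (ginv g) = ed g. Proof. by rewrite /ea mxE. Qed.
Lemma ebI g : eb (ginv g) = - eb g. Proof. by rewrite /eb mxE. Qed.
Lemma ecI g : ec (ginv g) = - ec g. Proof. by rewrite /ec mxE. Qed.
Lemma edI g : ed (ginv g) = ea g. Proof. by rewrite /ed mxE. Qed.

Lemma ord2_cases (i : 'I_2) : i = 0 \/ i = 1.
Proof.
case: i => [[|[|n]] hn]; [left | right | by []]; by apply/val_inj.
Qed.

Lemma mx2_eq (k g : 'M[int]_2) : ea k = ea g -> eb k = eb g -> ec k = ec g -> ed k = ed g -> k = g.
Proof.
move=> h1 h2 h3 h4; apply/matrixP => i j.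
by case: (ord2_cases i) => ->; case: (ord2_cases j) => ->.
Qed.

Lemma ea1 : ea 1 = 1. Proof. by rewrite /ea mxE. Qed.
Lemma eb1 : eb 1 = 0. Proof. by rewrite /eb mxE. Qed.
Lemma ec1 : ec 1 = 0. Proof. by rewrite /ec mxE. Qed.
Lemma ed1 : ed 1 = 1. Proof. by rewrite /ed mxE. Qed.

Lemma ginvK g : sl g -> ginv g *m g = 1.
Proof.
move=> hg; apply: mx2_eq; rewrite ?eaM ?ebM ?ecM ?edM ?eaI ?ebI ?ecI ?edI ?ea1 ?eb1 ?ec1 ?ed1.
- by rewrite -hg; ring.
- ring.
- ring.
- by rewrite -hg; ring.
Qed.

Lemma ginvK' g : sl g -> g *m ginv g = 1.
Proof.
move=> hg; apply: mx2_eq; rewrite ?eaM ?ebM ?ecM ?edM ?eaI ?ebI ?ecI ?edI ?ea1 ?eb1 ?ec1 ?ed1.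
- by rewrite -hg; ring.
- ring.
- ring.
- by rewrite -hg; ring.
Qed.

Lemma sl_ginv g : sl g -> sl (ginv g).
Proof. by rewrite /sl eaI ebI ecI edI => <-; ring. Qed.


Ltac comps := rewrite ?(Cint, ReD, ImD, ReM, ImM, ReN, ImN, ReV, ImV, ReJ, ImJ, ReR, ImR, Re1, Im1).

Lemma sl_F (F : comNzRingType) g : sl g ->
  (ea g)%:~R * (ed g)%:~R - (eb g)%:~R * (ec g)%:~R = 1 :> F.
Proof. by rewrite /sl => h; rewrite -!intrM -intrB h. Qed.

Lemma den_nz g (t : C) : sl g -> 0 < complex.Im t ->
  (ec g)%:~R * t + (ed g)%:~R != 0 :> C.
Proof.
move=> hg hy; apply/eqP => h.
have hI := congr1 (@complex.Im Rr) h; have hR := congr1 (@complex.Re Rr) h.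
move: hI hR; comps; rewrite ?mul0r ?addr0 ?mulr0 ?subr0 => hI hR.
have hc : (ec g)%:~R = 0 :> Rr.
  by apply/eqP; move: hI => /eqP; rewrite mulf_eq0 (gt_eqF hy) orbF.
move: hR; rewrite hc mul0r add0r => hd.
have := sl_F Rr hg; rewrite hc hd !mulr0 subr0 => /eqP; by rewrite eq_sym oner_eq0.
Qed.

Lemma Im_mob g (t : C) : sl g -> 0 < complex.Im t -> 0 < complex.Im (mob g t).
Proof.
move=> hg hy; have hD := den_nz hg hy.
rewrite /mob; move: hD.
have hs := sl_F Rr hg.
move: hs; set a := ea g; set b := eb g; set c := ec g; set d := ed g => hs hD.
have hn : 0 < complex.Re ((c%:~R : C) * t + d%:~R) ^+ 2 + complex.Im ((c%:~R : C) * t + d%:~R) ^+ 2.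
  case E: ((c%:~R : C) * t + d%:~R) hD => [u v] hD /=.
  rewrite lt_neqAle addr_ge0 ?sqr_ge0 // andbT eq_sym paddr_eq0 ?sqr_ge0 // !sqrf_eq0.
  by apply: contra hD => /andP[/eqP -> /eqP ->].
move: hn; comps.
rewrite ?mul0r ?mulr0 ?addr0 ?subr0 => hn.
set x := complex.Re t in hn *; set y := complex.Im t in hn *.
set n := _ + _ in hn *.
have -> : (a%:~R * x + b%:~R) * - ((c%:~R * y) / n) + a%:~R * y * ((c%:~R * x + d%:~R) / n)
   = y * (a%:~R * d%:~R - b%:~R * c%:~R) / n.
  by field; rewrite gt_eqF.
by rewrite hs mulr1 divr_gt0.
Qed.

Lemma castM (F : pzRingType) (k g : 'M[int]_2) :
  [/\ (ea (k *m g))%:~R = (ea k)%:~R * (ea g)%:~R + (eb k)%:~R * (ec g)%:~R :> F,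
      (eb (k *m g))%:~R = (ea k)%:~R * (eb g)%:~R + (eb k)%:~R * (ed g)%:~R :> F,
      (ec (k *m g))%:~R = (ec k)%:~R * (ea g)%:~R + (ed k)%:~R * (ec g)%:~R :> F &
      (ed (k *m g))%:~R = (ec k)%:~R * (eb g)%:~R + (ed k)%:~R * (ed g)%:~R :> F].
Proof. by rewrite eaM ebM ecM edM !intrD !intrM. Qed.

Lemma mob_comp k g (t : C) : sl k -> sl g -> 0 < complex.Im t ->
  mob k (mob g t) = mob (k *m g) t.
Proof.
move=> hk hg hy.
have h1 := den_nz hg hy.
have h2 := den_nz hk (Im_mob hg hy).
have h3 := den_nz (sl_mul hk hg) hy.
move: h2 h3; rewrite /mob; case: (castM C k g) => -> -> -> ->.
move: h1.
set a := (ea g)%:~R : C; set b := (eb g)%:~R : C; set c := (ec g)%:~R : C; set d := (ed g)%:~R : C.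
set a' := (ea k)%:~R : C; set b' := (eb k)%:~R : C; set c' := (ec k)%:~R : C; set d' := (ed k)%:~R : C.
move=> h1 h2 h3.
by field; rewrite ?h1 ?h2 ?h3.
Qed.

Lemma z_comp k g (t z : C) (m n : int) : sl k -> sl g -> 0 < complex.Im t ->
  (z / ((ec g)%:~R * t + (ed g)%:~R) + m%:~R - n%:~R * mob g t)
     / ((ec k)%:~R * mob g t + (ed k)%:~R)
  = (z + (m * ed g - n * eb g)%:~R - (n * ea g - m * ec g)%:~R * t)
     / ((ec (k *m g))%:~R * t + (ed (k *m g))%:~R).
Proof.
move=> hk hg hy.
have h1 := den_nz hg hy.
have h2 := den_nz hk (Im_mob hg hy).
have h3 := den_nz (sl_mul hk hg) hy.
move: h2 h3; rewrite /mob; case: (castM C k g) => _ _ -> ->.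
rewrite !intrB !intrM.
move: h1.
set a := (ea g)%:~R : C; set b := (eb g)%:~R : C; set c := (ec g)%:~R : C; set d := (ed g)%:~R : C.
set a' := (ea k)%:~R : C; set b' := (eb k)%:~R : C; set c' := (ec k)%:~R : C; set d' := (ed k)%:~R : C.
move=> h1 h2 h3.
by field; rewrite ?h1 ?h2 ?h3.
Qed.

Lemma redN_mul N (k g : 'M[int]_2) : redN N (k *m g) = redN N k *m redN N g.
Proof. exact: (map_mxM ( *~%R (1 : 'Z_N)) k g). Qed.

Lemma actSL_comp N k g (t z : C) (h : 'M['Z_N]_2) (m n : int) :
  sl k -> sl g -> 0 < complex.Im t ->
  actSL k (actZ2 m n (actSL g (t, z, h))) =
  actSL (k *m g) (actZ2 (m * ed g - n * eb g) (n * ea g - m * ec g) (t, z, h)).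
Proof.
move=> hk hg hy /=.
by rewrite mob_comp // z_comp // redN_mul mulmxA.
Qed.

Lemma pt_act N g (t z : C) (h : 'M['Z_N]_2) : sl g -> 0 < complex.Im t ->
  pt t z h = pt (mob g t) (z / ((ec g)%:~R * t + (ed g)%:~R)) (redN N g *m h).
Proof.
move=> hg hy; apply: functional_extensionality => y.
apply: propositional_extensionality; rewrite /pt /same_orbit; split.
- move=> [k [m [n [/isSL_sl hk ->]]]].
  exists (k *m ginv g), (ea g * m + eb g * n), (ec g * m + ed g * n).
  split; first exact/sl_isSL/sl_mul/sl_ginv.
  have := @actSL_comp N _ _ t z h (ea g * m + eb g * n) (ec g * m + ed g * n)
     (sl_mul hk (sl_ginv hg)) hg hy.
  rewrite [actSL g _]/= => ->.
  rewrite -mulmxA ginvK // mulmx1.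
  have hs := hg; rewrite /sl in hs.
  congr (actSL k (actZ2 _ _ _)).
  + by rewrite -{1}(mulr1 m) -hs; ring.
  + by rewrite -{1}(mulr1 n) -hs; ring.
- move=> [k [m [n [/isSL_sl hk ->]]]].
  exists (k *m g), (m * ed g - n * eb g), (n * ea g - m * ec g).
  split; first exact/sl_isSL/sl_mul.
  by rewrite -actSL_comp.
Qed.

Lemma gact_pt N (G : 'M['Z_N]_2) (t z : C) (h : 'M['Z_N]_2) :
  gactE G (pt t z h) = pt t z (h *m G^T).
Proof.
apply: functional_extensionality => y.
apply: propositional_extensionality; rewrite /gactE /pt /same_orbit; split.
- move=> [t' [z' [h' [[k [m [n [hk e]]]] ->]]]].
  exists k, m, n; split => //.
  move: e => /= [-> -> ->]. by rewrite mulmxA.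
- move=> [k [m [n [hk ->]]]] /=.
  exists (mob k t), ((z + m%:~R - n%:~R * t) / ((ec k)%:~R * t + (ed k)%:~R)), (redN N k *m h).
  split; last by rewrite mulmxA.
  by exists k, m, n.
Qed.

Lemma eaS : ea sigmaZ = 0. Proof. by rewrite /ea mxE. Qed.
Lemma ebS : eb sigmaZ = -1. Proof. by rewrite /eb mxE. Qed.
Lemma ecS : ec sigmaZ = 1. Proof. by rewrite /ec mxE. Qed.
Lemma edS : ed sigmaZ = 0. Proof. by rewrite /ed mxE. Qed.
Lemma eaT g : ea g^T = ea g. Proof. by rewrite /ea mxE. Qed.
Lemma ebT g : eb g^T = ec g. Proof. by rewrite /eb /ec mxE. Qed.
Lemma ecT g : ec g^T = eb g. Proof. by rewrite /eb /ec mxE. Qed.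
Lemma edT g : ed g^T = ed g. Proof. by rewrite /ed mxE. Qed.

Lemma sigma_sympl g : sl g -> g *m sigmaZ *m g^T = sigmaZ.
Proof.
move=> hg; have hs := hg; rewrite /sl in hs.
apply: mx2_eq; rewrite ?(eaM, ebM, ecM, edM) ?eaS ?ebS ?ecS ?edS ?eaT ?ebT ?ecT ?edT.
- ring.
- apply/eqP; rewrite -subr_eq0; apply/eqP.
  transitivity ((-1) * (ea g * ed g - eb g * ec g - 1)); [ring | by rewrite hs subrr mulr0].
- apply/eqP; rewrite -subr_eq0; apply/eqP.
  transitivity (1 * (ea g * ed g - eb g * ec g - 1)); [ring | by rewrite hs subrr mulr0].
- ring.
Qed.

Lemma sigma_sympl_N N g : sl g ->
  redN N g *m (redN N sigmaZ *m (redN N g)^T) = redN N sigmaZ.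
Proof.
move=> hg; have -> : (redN N g)^T = redN N g^T by rewrite /redN map_trmx.
rewrite -!redN_mul mulmxA.
by rewrite sigma_sympl.
Qed.

Lemma cell_eq N g (P : poly1) (t : C) (s : Rr) : sl g -> 0 < complex.Im t ->
  gactE (redN N g) (pt t (toC s * ((P.1)%:~R * t + (P.2)%:~R)) (redN N sigmaZ)) =
  pt (mob g t) (toC s * (((actPoly g P).1)%:~R * mob g t + ((actPoly g P).2)%:~R))
     (redN N sigmaZ).
Proof.
move=> hg hy.
rewrite gact_pt (pt_act _ _ hg hy) sigma_sympl_N //.
congr pt.
have hD := den_nz hg hy.
have hs := sl_F C hg.
case: P => m n /=.
rewrite /mob !intrB !intrM.
move: hD hs.
set a := (ea g)%:~R : C; set b := (eb g)%:~R : C; set c := (ec g)%:~R : C; set d := (ed g)%:~R : C.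
move=> hD hs.
transitivity (toC s * ((a * d - b * c) * (m%:~R * t + n%:~R)) / (c * t + d)).
  by rewrite hs mul1r.
by field.
Qed.

Section Reals.
Implicit Types (p q x y c : Rr).

Lemma betwE a b z : betw a b z <-> (z - a) * (z - b) <= 0.
Proof.
rewrite /betw /Order.min /Order.max; case: (ltP a b) => hab.
- split.
  + move=> /andP[h1 h2]; nra.
  + move=> h; apply/andP; split; nra.
- split.
  + move=> /andP[h1 h2]; nra.
  + move=> h; apply/andP; split; nra.
Qed.

Lemma R1 p q x y : 0 <= q -> 0 < y ->
  ((x = p /\ q <= y) <-> (2 * y * (x - p) = 0 /\ (p - x) ^+ 2 + q ^+ 2 - y ^+ 2 <= 0)).
Proof.
move=> hq hy; split.
- move=> [-> h]; split; first ring.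
  rewrite subrr expr0n /= add0r subr_le0; nra.
- move=> [h1 h2].
  have hx : x = p.
    apply/eqP; rewrite -subr_eq0; apply/eqP.
    move: h1 => /eqP; rewrite mulf_eq0 mulf_eq0 (gt_eqF hy) orbF => /orP[|/eqP //].
    by rewrite pnatr_eq0.
  split => //; move: h2; rewrite hx subrr expr0n /= add0r subr_le0 => h2; nra.
Qed.

Lemma R2 p q x y : 0 <= q -> 0 < y ->
  ((x = p /\ y = q) <->
   (((p - x) ^+ 2 + q ^+ 2 - y ^+ 2) ^+ 2 + (2 * y * (x - p)) ^+ 2 <= 0)).
Proof.
move=> hq hy; split.
- by move=> [-> ->]; rewrite le_eqVlt; apply/orP; left; apply/eqP; ring.
- move=> h.
  have s1 := sqr_ge0 ((p - x) ^+ 2 + q ^+ 2 - y ^+ 2).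
  have s2 := sqr_ge0 (2 * y * (x - p)).
  have h1 : ((p - x) ^+ 2 + q ^+ 2 - y ^+ 2) ^+ 2 = 0 by apply/eqP; rewrite eq_le s1 andbT; lra.
  have h2 : (2 * y * (x - p)) ^+ 2 = 0 by apply/eqP; rewrite eq_le s2 andbT; lra.
  move: h2 => /eqP; rewrite sqrf_eq0 => /eqP h2.
  have [hx _] : x = p /\ q <= y by apply: (proj2 (@R1 p q x y hq hy)); split => //; move: h1 => /eqP; rewrite sqrf_eq0 => /eqP ->.
  split => //; move: h1; rewrite hx subrr expr0n /= add0r => /eqP; rewrite sqrf_eq0 => /eqP h1; nra.
Qed.

Definition al p q x y := (p - x) ^+ 2 + q ^+ 2 - y ^+ 2.
Definition be p x y := 2 * y * (x - p).

Lemma R3 p q1 q2 x y : 0 <= q1 -> 0 <= q2 -> q1 != q2 -> 0 < y ->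
  ((x = p /\ betw q1 q2 y) <->
   (be p x y * al p q2 x y - al p q1 x y * be p x y = 0 /\
    al p q1 x y * al p q2 x y + be p x y * be p x y <= 0)).
Proof.
move=> h1 h2 hq hy.
have hpos : 0 < (y + q1) * (y + q2) by apply: mulr_gt0; lra.
split.
- move=> [-> /betwE hb]; split; first by rewrite /be /al; ring.
  have -> : al p q1 p y * al p q2 p y + be p p y * be p p y
     = ((y - q1) * (y - q2)) * ((y + q1) * (y + q2)) by rewrite /al /be; ring.
  by apply: mulr_le0_ge0 => //; apply: ltW.
- move=> [hI hR].
  have hx : x = p.
    have e : be p x y * al p q2 x y - al p q1 x y * be p x y
           = (2 * y * (x - p)) * ((q2 - q1) * (q2 + q1)) by rewrite /be /al; ring.
    move: hI; rewrite e => /eqP; rewrite !mulf_eq0 (gt_eqF hy) pnatr_eq0 /=.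
    move=> /orP[/eqP/subr0_eq //|/orP[/eqP/subr0_eq h|/eqP h]].
      by move: hq; rewrite h eqxx.
    have e1 : q1 = 0 by lra.
    have e2 : q2 = 0 by lra.
    by move: hq; rewrite e1 e2 eqxx.
  split => //; apply/betwE.
  move: hR; rewrite hx.
  have -> : al p q1 p y * al p q2 p y + be p p y * be p p y
     = ((y - q1) * (y - q2)) * ((y + q1) * (y + q2)) by rewrite /al /be; ring.
  by rewrite pmulr_lle0.
Qed.

Lemma R4 p1 q1 p2 q2 x y : p1 != p2 -> 0 < y ->
  ((exists c, (p1 - c) ^+ 2 + q1 ^+ 2 = (p2 - c) ^+ 2 + q2 ^+ 2 /\
              (x - c) ^+ 2 + y ^+ 2 = (p1 - c) ^+ 2 + q1 ^+ 2 /\ betw p1 p2 x) <->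
   (be p1 x y * al p2 q2 x y - al p1 q1 x y * be p2 x y = 0 /\
    al p1 q1 x y * al p2 q2 x y + be p1 x y * be p2 x y <= 0)).
Proof.
move=> hp hy; split.
- move=> [c [E1 [E2 /betwE hb]]].
  have s1 : q1 ^+ 2 = (x - c) ^+ 2 + y ^+ 2 - (p1 - c) ^+ 2 by lra.
  have s2 : q2 ^+ 2 = (x - c) ^+ 2 + y ^+ 2 - (p2 - c) ^+ 2 by lra.
  have a1 : al p1 q1 x y = 2 * (x - p1) * (x - c) by rewrite /al s1; ring.
  have a2 : al p2 q2 x y = 2 * (x - p2) * (x - c) by rewrite /al s2; ring.
  rewrite a1 a2 /be; split; first ring.
  have -> : 2 * (x - p1) * (x - c) * (2 * (x - p2) * (x - c)) +
            2 * y * (x - p1) * (2 * y * (x - p2))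
          = ((x - p1) * (x - p2)) * (4 * ((x - c) ^+ 2 + y ^+ 2)) by ring.
  apply: mulr_le0_ge0 => //; apply: mulr_ge0; first lra.
  by apply: addr_ge0; apply: sqr_ge0.
- move=> [hI hR].
  have hp' : p2 - p1 != 0 by rewrite subr_eq0 eq_sym.
  pose c := (p2 ^+ 2 + q2 ^+ 2 - p1 ^+ 2 - q1 ^+ 2) / (2 * (p2 - p1)).
  have hc : 2 * (p2 - p1) * c = p2 ^+ 2 + q2 ^+ 2 - p1 ^+ 2 - q1 ^+ 2.
    rewrite /c; field; exact: hp'.
  have E1 : (p1 - c) ^+ 2 + q1 ^+ 2 = (p2 - c) ^+ 2 + q2 ^+ 2.
    apply/eqP; rewrite -subr_eq0; apply/eqP.
    transitivity (2 * (p2 - p1) * c - (p2 ^+ 2 + q2 ^+ 2 - p1 ^+ 2 - q1 ^+ 2)); first ring.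
    by rewrite hc subrr.
  pose E := (p1 - c) ^+ 2 + q1 ^+ 2 - (x - c) ^+ 2 - y ^+ 2.
  have s2 : q2 ^+ 2 = (p1 - c) ^+ 2 + q1 ^+ 2 - (p2 - c) ^+ 2 by lra.
  have a1 : al p1 q1 x y = 2 * (x - p1) * (x - c) + E by rewrite /al /E; ring.
  have a2 : al p2 q2 x y = 2 * (x - p2) * (x - c) + E by rewrite /al /E s2; ring.
  have hE : E = 0.
    move: hI; rewrite a1 a2 /be.
    have -> : 2 * y * (x - p1) * (2 * (x - p2) * (x - c) + E) -
              (2 * (x - p1) * (x - c) + E) * (2 * y * (x - p2))
            = (2 * y * (p2 - p1)) * E by ring.
    move/eqP; rewrite mulf_eq0 => /orP[|/eqP //].
    rewrite !mulf_eq0 pnatr_eq0 (gt_eqF hy) /= => h; by move: hp'; rewrite h.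
  exists c; split => //; split.
    by move: hE; rewrite /E => h; lra.
  apply/betwE; move: hR; rewrite a1 a2 hE !addr0 /be.
  have -> : 2 * (x - p1) * (x - c) * (2 * (x - p2) * (x - c)) +
            2 * y * (x - p1) * (2 * y * (x - p2))
          = ((x - p1) * (x - p2)) * (4 * ((x - c) ^+ 2 + y ^+ 2)) by ring.
  rewrite pmulr_lle0 //; apply: mulr_gt0; first lra.
  by apply: ltr_wpDl; [apply: sqr_ge0 | apply: exprn_gt0].
Qed.

End Reals.

Definition AptO (o : option C) (t : C) : C :=
  if o is Some u then (u - t) * (conjc u - t) else 1.

Definition goodF (o1 o2 : option C) (t : C) : Prop :=
  complex.Im (AptO o1 t * conjc (AptO o2 t)) = 0 /\
  complex.Re (AptO o1 t * conjc (AptO o2 t)) <= 0.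

Definition okF (o : option C) : Prop := if o is Some u then 0 <= complex.Im u else True.

Definition geodF (o1 o2 : option C) (tau : C) : Prop :=
  match o1, o2 with
  | Some u, Some v =>
      if u == v then tau = u
      else if complex.Re u == complex.Re v then
        complex.Re tau = complex.Re u /\ betw (complex.Im u) (complex.Im v) (complex.Im tau)
      else exists c : Rr,
        `|u - toC c| = `|v - toC c| /\ `|tau - toC c| = `|u - toC c| /\
        betw (complex.Re u) (complex.Re v) (complex.Re tau)
  | None, Some v | Some v, None =>
      complex.Re tau = complex.Re v /\ complex.Im v <= complex.Im tau
  | None, None => False
  end.

Lemma geod_F a b tau : geod a b tau <-> 0 < complex.Im tau /\ geodF (finpt a) (finpt b) tau.
Proof. by []. Qed.

Lemma ReMJ (z w : C) : complex.Re (z * conjc w) = complex.Re z * complex.Re w + complex.Im z * complex.Im w.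
Proof. comps; ring. Qed.
Lemma ImMJ (z w : C) : complex.Im (z * conjc w) = complex.Im z * complex.Re w - complex.Re z * complex.Im w.
Proof. comps; ring. Qed.
Lemma ReA (u t : C) : complex.Re (AptO (Some u) t) =
  al (complex.Re u) (complex.Im u) (complex.Re t) (complex.Im t).
Proof. rewrite /= /al; comps; ring. Qed.
Lemma ImA (u t : C) : complex.Im (AptO (Some u) t) =
  be (complex.Re u) (complex.Re t) (complex.Im t).
Proof. rewrite /= /be; comps; ring. Qed.

Lemma Ceq (u v : C) : u = v <-> complex.Re u = complex.Re v /\ complex.Im u = complex.Im v.
Proof. by case: u => a b; case: v => c d /=; split => [[-> ->]|[-> ->]]. Qed.

Lemma normEq (z w : C) : `|z| = `|w| <->
  complex.Re z ^+ 2 + complex.Im z ^+ 2 = complex.Re w ^+ 2 + complex.Im w ^+ 2.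
Proof.
rewrite !normc_def; split.
- move=> /complexI h.
  have h1 : 0 <= complex.Re z ^+ 2 + complex.Im z ^+ 2 by apply: addr_ge0; apply: sqr_ge0.
  have h2 : 0 <= complex.Re w ^+ 2 + complex.Im w ^+ 2 by apply: addr_ge0; apply: sqr_ge0.
  by rewrite -(sqr_sqrtr h1) -(sqr_sqrtr h2) h.
- by move=> ->.
Qed.

Lemma geodF_good o1 o2 t : okF o1 -> okF o2 -> 0 < complex.Im t ->
  (geodF o1 o2 t <-> goodF o1 o2 t).
Proof.
move=> h1 h2 hy; rewrite /goodF ReMJ ImMJ.
case: o1 h1 => [u|] h1; case: o2 h2 => [v|] h2 /=.
- rewrite !ReA !ImA.
  case: eqP => [<-|huv].
  + rewrite Ceq.
    have := @R2 (complex.Re u) (complex.Im u) (complex.Re t) (complex.Im t) h1 hy.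
    rewrite -/(al _ _ _ _) -/(be _ _ _) !expr2 => ->.
    split; last by case.
    move=> h; split => //; ring.
  case: eqP => [hre|hre].
  + rewrite -hre.
    have hq : complex.Im u != complex.Im v.
      apply/eqP => hq; apply: huv; exact/Ceq.
    exact: R3.
  + have hp : complex.Re u != complex.Re v by apply/eqP.
    rewrite -(@R4 (complex.Re u) (complex.Im u) (complex.Re v) (complex.Im v) (complex.Re t) (complex.Im t) hp hy).
    split.
    * move=> [c [n1 [n2 hb]]]; exists c; move: n1 n2; rewrite !normEq; comps.
      by rewrite !subr0 => -> ->.
    * move=> [c [n1 [n2 hb]]]; exists c; rewrite !normEq; comps.
      by rewrite !subr0 n1 n2.
- rewrite !mulr1 !mulr0 subr0 addr0 (ReA u t) (ImA u t) /al /be.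
  exact: (@R1 (complex.Re u) (complex.Im u) (complex.Re t) (complex.Im t) h1 hy).
- rewrite (ReA v t) (ImA v t) !mul0r !mul1r addr0 sub0r /al /be.
  rewrite (@R1 (complex.Re v) (complex.Im v) (complex.Re t) (complex.Im t) h2 hy).
  split => [[h h']|[h h']]; split => //; first by rewrite h oppr0.
  by apply/eqP; rewrite -oppr_eq0 h.
- rewrite !mul0r !mul1r subr0 addr0; split => // [[_]]; by rewrite ler10.
Qed.

Lemma zJ (z : C) : z * conjc z = toC (complex.Re z ^+ 2 + complex.Im z ^+ 2).
Proof. by case: z => a b; rewrite /toC /= ; apply/Ceq; rewrite /=; split; ring. Qed.

Lemma nsq_pos (z : C) : z != 0 -> 0 < complex.Re z ^+ 2 + complex.Im z ^+ 2.
Proof.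
case: z => a b hz /=.
rewrite lt_neqAle addr_ge0 ?sqr_ge0 // andbT eq_sym paddr_eq0 ?sqr_ge0 // !sqrf_eq0.
by apply: contra hz => /andP[/eqP -> /eqP ->].
Qed.

Lemma conj_mob g (u : C) : conjc (mob g u) = mob g (conjc u).
Proof. by rewrite /mob rmorphM fmorphV !rmorphD !rmorphM !rmorph_int. Qed.

Lemma conj_int (z : int) : conjc (z%:~R : C) = z%:~R.
Proof. by rewrite rmorph_int. Qed.

Lemma fin_case g (u t : C) : sl g ->
  (ec g)%:~R * u + (ed g)%:~R != 0 :> C ->
  (ec g)%:~R * conjc u + (ed g)%:~R != 0 :> C ->
  (ec g)%:~R * t + (ed g)%:~R != 0 :> C ->
  exists k : Rr, 0 < k /\
  AptO (Some (mob g u)) (mob g t) * ((ec g)%:~R * t + (ed g)%:~R) ^+ 2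
   = toC k * AptO (Some u) t.
Proof.
move=> hg hu hu' ht.
set z := (ec g)%:~R * u + (ed g)%:~R.
have hz : z * conjc z = toC (complex.Re z ^+ 2 + complex.Im z ^+ 2) by apply: zJ.
have hzp := nsq_pos hu.
exists (complex.Re z ^+ 2 + complex.Im z ^+ 2)^-1; split; first by rewrite invr_gt0.
have hcz : conjc z = (ec g)%:~R * conjc u + (ed g)%:~R.
  by rewrite /z rmorphD rmorphM !rmorph_int.
have -> : toC ((complex.Re z ^+ 2 + complex.Im z ^+ 2)^-1) = (z * conjc z)^-1.
  by rewrite hz /toC fmorphV.
rewrite /= conj_mob hcz /z.
have hs := sl_F C hg.
move: hu hu' ht hs; rewrite /mob.
set a := (ea g)%:~R : C; set b := (eb g)%:~R : C; set c := (ec g)%:~R : C; set d := (ed g)%:~R : C.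
set w := conjc u.
move=> hu hu' ht hs.
transitivity ((a * d - b * c) ^+ 2 * ((c * u + d) * (c * w + d))^-1 * ((u - t) * (w - t))).
  field; rewrite ?hu ?hu' ?ht //.
by rewrite hs expr1n mul1r.
Qed.

Lemma phi_int (z : int) : toC (ratr (z%:~R : rat)) = z%:~R.
Proof. by rewrite /toC (rmorph_int (@ratr Rr)) rmorph_int. Qed.

Lemma phiD (x y : rat) : toC (ratr (x + y)) = toC (ratr x) + toC (ratr y).
Proof. by rewrite /toC (rmorphD (@ratr Rr)) rmorphD. Qed.
Lemma phiM (x y : rat) : toC (ratr (x * y)) = toC (ratr x) * toC (ratr y).
Proof. by rewrite /toC (rmorphM (@ratr Rr)) rmorphM. Qed.
Lemma phiV (x : rat) : toC (ratr (x^-1)) = (toC (ratr x))^-1.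
Proof. by rewrite /toC (fmorphV (@ratr Rr)) fmorphV. Qed.
Lemma phi_eq0 (x : rat) : (toC (ratr x) == 0) = (x == 0).
Proof. by rewrite /toC fmorph_eq0 (fmorph_eq0 (@ratr Rr)). Qed.
Lemma conj_toC (r : Rr) : conjc (toC r) = toC r.
Proof. by rewrite /toC /= oppr0. Qed.
Lemma toC_int (z : int) : toC (z%:~R) = z%:~R.
Proof. by rewrite /toC rmorph_int. Qed.

Lemma conj_den g (u : C) : (ec g)%:~R * u + (ed g)%:~R != 0 :> C ->
  (ec g)%:~R * conjc u + (ed g)%:~R != 0 :> C.
Proof.
move=> h; have : conjc ((ec g)%:~R * u + (ed g)%:~R) != 0 by rewrite conjc_eq0.
by rewrite rmorphD rmorphM !rmorph_int.
Qed.

Lemma toC_intX (z : int) (n : nat) : toC ((z%:~R : Rr) ^+ n) = (z%:~R : C) ^+ n.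
Proof. by rewrite /toC rmorphXn rmorph_int. Qed.

Lemma AptO_Some (u t : C) : AptO (Some u) t = (u - t) * (conjc u - t). Proof. by []. Qed.
Lemma AptO_None (t : C) : AptO None t = 1. Proof. by []. Qed.

Lemma sl_d g : sl g -> ec g = 0 -> ed g != 0.
Proof. rewrite /sl => h hc; apply/eqP => hd; move: h; rewrite hc hd !mulr0 subr0 => /eqP. by []. Qed.

Lemma Apt_mob g a (t : C) : sl g -> validHP1 a -> 0 < complex.Im t ->
  exists k : Rr, 0 < k /\
  AptO (finpt (mobHP1 g a)) (mob g t) * ((ec g)%:~R * t + (ed g)%:~R) ^+ 2
   = toC k * AptO (finpt a) t.
Proof.
move=> hg ha hy; have hD := den_nz hg hy.
case: a ha => [u|r|] ha.
- have hu := den_nz hg ha.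
  exact: fin_case hg hu (conj_den hu) hD.
- rewrite [mobHP1 _ _]/=.
  set den := (ec g)%:~R * r + (ed g)%:~R.
  have hden : toC (ratr den) = (ec g)%:~R * toC (ratr r) + (ed g)%:~R.
    by rewrite /den phiD phiM !phi_int.
  case: eqP => [h0|/eqP h0]; rewrite [finpt _]/=.
  + have hc : ec g != 0.
      apply/eqP => hc; move: h0; rewrite /den hc mul0r add0r => /eqP.
      by rewrite intr_eq0; apply/negP/sl_d.
    exists ((ec g)%:~R ^+ 2); split.
      by rewrite lt_def sqr_ge0 andbT sqrf_eq0 intr_eq0.
    have hcu : (ec g)%:~R * toC (ratr r) + (ed g)%:~R = 0 :> C.
      by rewrite -hden h0 /toC !rmorph0.
    change (AptO (finpt (Cusp r)) t) with ((toC (ratr r) - t) * (conjc (toC (ratr r)) - t)).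
    change (AptO None (mob g t)) with (1 : C).
    rewrite conj_toC toC_intX.
    have -> : (ed g)%:~R = - ((ec g)%:~R * toC (ratr r)) :> C.
      by apply/eqP; rewrite -addr_eq0 addrC hcu.
    ring.
  + rewrite (_ : toC (ratr (((ea g)%:~R * r + (eb g)%:~R) / den)) = mob g (toC (ratr r))); last first.
      by rewrite /mob phiM phiV hden phiD phiM !phi_int.
    have hu : (ec g)%:~R * toC (ratr r) + (ed g)%:~R != 0 :> C by rewrite -hden phi_eq0.
    exact: fin_case hg hu (conj_den hu) hD.
- rewrite [mobHP1 _ _]/=.
  have hs := sl_F C hg.
  case: eqP => [hc|/eqP hc]; rewrite [finpt _]/=.
  + exists ((ed g)%:~R ^+ 2); split.
      by rewrite lt_def sqr_ge0 andbT sqrf_eq0 intr_eq0; apply: sl_d.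
    by rewrite AptO_None toC_intX hc mul0r add0r mulr1 mul1r.
  + exists (((ec g)%:~R ^+ 2)^-1); split.
      by rewrite invr_gt0 lt_def sqr_ge0 andbT sqrf_eq0 intr_eq0.
    rewrite AptO_Some AptO_None conj_toC phiM phiV !phi_int mulr1.
    have -> : toC (((ec g)%:~R ^+ 2)^-1) = ((ec g)%:~R ^+ 2)^-1 :> C by rewrite /toC fmorphV; congr (_^-1); exact: toC_intX.
    have hc' : (ec g)%:~R != 0 :> C by rewrite intr_eq0.
    move: hD hs hc'; rewrite /mob.
    set a := (ea g)%:~R : C; set b := (eb g)%:~R : C; set c := (ec g)%:~R : C; set d := (ed g)%:~R : C.
    move=> hD hs hc'.
    transitivity ((a * d - b * c) ^+ 2 / c ^+ 2).
      field; rewrite ?hD ?hc' //.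
    by rewrite hs expr1n mul1r.
Qed.

Lemma ReS (k : Rr) (z : C) : complex.Re (toC k * z) = k * complex.Re z.
Proof. by rewrite /toC; comps; rewrite mul0r subr0. Qed.
Lemma ImS (k : Rr) (z : C) : complex.Im (toC k * z) = k * complex.Im z.
Proof. by rewrite /toC; comps; rewrite mul0r addr0. Qed.

Lemma toCM (x y : Rr) : toC (x * y) = toC x * toC y.
Proof. by rewrite /toC rmorphM. Qed.
Lemma toCV (x : Rr) : toC (x^-1) = (toC x)^-1.
Proof. by rewrite /toC fmorphV. Qed.

Lemma conjM (x y : C) : conjc (x * y) = conjc x * conjc y.
Proof. exact: rmorphM. Qed.

Lemma good_mob g a b t : sl g -> validHP1 a -> validHP1 b -> 0 < complex.Im t ->
  (goodF (finpt (mobHP1 g a)) (finpt (mobHP1 g b)) (mob g t) <->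
   goodF (finpt a) (finpt b) t).
Proof.
move=> hg ha hb hy.
have [ka [hka Ea]] := @Apt_mob g a t hg ha hy.
have [kb [hkb Eb]] := @Apt_mob g b t hg hb hy.
have hD := den_nz hg hy.
set W := ((ec g)%:~R * t + (ed g)%:~R) ^+ 2 in Ea Eb.
have hW : W != 0 by rewrite expf_neq0.
have hw := nsq_pos hW.
set w := complex.Re W ^+ 2 + complex.Im W ^+ 2 in hw.
have hWJ : W * conjc W = toC w by apply: zJ.
set A' := AptO _ (mob g t) in Ea.
set B' := AptO _ (mob g t) in Eb.
set A := AptO (finpt a) t in Ea.
set B := AptO (finpt b) t in Eb.
have key : A' * conjc B' = toC (ka * kb * w^-1) * (A * conjc B).
  have hw0 : toC w != 0 by rewrite -hWJ mulf_neq0 // conjc_eq0.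
  apply: (mulIf hw0).
  rewrite -hWJ.
  transitivity ((A' * W) * conjc (B' * W)); first by rewrite (conjM B' W); ring.
  rewrite Ea Eb (conjM (toC kb) B) conj_toC hWJ !toCM toCV.
  by field.
rewrite /goodF -/A' -/B' -/A -/B key ReS ImS.
split => [[h1 h2]|[h1 h2]]; split.
- by move: h1 => /eqP; rewrite mulf_eq0 => /orP[/eqP|/eqP //]; move=> h; exfalso; move: h => /eqP; rewrite !mulf_eq0 invr_eq0 !(gt_eqF hka, gt_eqF hkb, gt_eqF hw).
- by move: h2; rewrite pmulr_rle0 // !mulr_gt0 // invr_gt0.
- by rewrite h1 mulr0.
- by rewrite pmulr_rle0 // !mulr_gt0 // invr_gt0.
Qed.

Lemma valid_mob g a : sl g -> validHP1 a -> validHP1 (mobHP1 g a).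
Proof.
move=> hg; case: a => [u|r|] /= ha; first exact: Im_mob.
- by case: ifP.
- by case: ifP.
Qed.

Lemma valid_ok a : validHP1 a -> okF (finpt a).
Proof. by case: a => [u|r|] //= /ltW. Qed.

Lemma geod_mob g a b t : sl g -> validHP1 a -> validHP1 b -> 0 < complex.Im t ->
  (geod a b t <-> geod (mobHP1 g a) (mobHP1 g b) (mob g t)).
Proof.
move=> hg ha hb hy; rewrite !geod_F.
have hy' := Im_mob hg hy.
have oa := valid_ok ha; have ob := valid_ok hb.
have oa' := valid_ok (valid_mob hg ha); have ob' := valid_ok (valid_mob hg hb).
split => [[_ h]|[_ h]]; split => //.
- by apply/(geodF_good oa' ob' hy')/(good_mob hg ha hb hy)/(geodF_good oa ob hy).
- by apply/(geodF_good oa ob hy)/(good_mob hg ha hb hy)/(geodF_good oa' ob' hy').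
Qed.

Lemma mob1 (t : C) : mob 1 t = t.
Proof. by rewrite /mob ea1 eb1 ec1 ed1 mul1r addr0 mul0r add0r divr1. Qed.

Lemma mob_inv g t : sl g -> 0 < complex.Im t -> mob (ginv g) (mob g t) = t.
Proof. by move=> hg hy; rewrite (mob_comp (sl_ginv hg) hg hy) ginvK // mob1. Qed.

Lemma mob_inv' g t : sl g -> 0 < complex.Im t -> mob g (mob (ginv g) t) = t.
Proof. by move=> hg hy; rewrite (mob_comp hg (sl_ginv hg) hy) ginvK' // mob1. Qed.

Theorem lemma4p3 (N : nat) (hN : (4 <= N)%N) (g : 'M[int]_2) (hg : isSL2Z g)
  (P : poly1) (a b : HP1) (ha : validHP1 a) (hb : validHP1 b) :
  chain_eq (pushE (redN N g) (shokurov N P a b))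
           (shokurov N (actPoly g P) (mobHP1 g a) (mobHP1 g b)).
Proof.
have hs := isSL_sl hg.
exists (mob g); rewrite /=.
split; [|split; [|split; [|split]]].
- move=> t ht; have [hy _] := ht.
  exact/(geod_mob hs ha hb hy).
- move=> t' ht'; have [hy' _] := ht'.
  have hy := Im_mob (sl_ginv hs) hy'.
  exists (mob (ginv g) t'); split; last exact: mob_inv'.
  apply/(geod_mob hs ha hb hy); by rewrite mob_inv'.
- move=> t1 t2 [h1 _] [h2 _] e.
  by rewrite -(mob_inv hs h1) e mob_inv.
- move=> t1 t2 ht1 ht2; have [hy1 _] := ht1; have [hy2 _] := ht2.
  rewrite /geod_before.
  have hv2 : validHP1 (Hpt t2) by [].
  rewrite -(geod_mob hs ha hb hy1) -(geod_mob hs ha hb hy2).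
  rewrite -[Hpt (mob g t2)]/(mobHP1 g (Hpt t2)) -(geod_mob hs ha hv2 hy1).
  by [].
- move=> t s [hy _] _.
  exact: cell_eq.
Qed.
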